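(* Let $M$ be a real symmetric $n\times n$ matrix with induced signed graph $\Gamma=(G,\sigma)$, $G=(V,E)$. Let $\lambda_k$ be the $k$-th eigenvalue of $M$ with eigenfunction $f_k$, and suppose $\lambda_{k-1}<\lambda_k$ (if $k>1$). Then $$\mathfrak{S}(f_k)\ge k+v_l-1-n-z_l+z_r,$$ where $v_l$ is the number of leaves (vertices of degree $1$) of $G$, $z_l=|\{x: d_x=1,\ f_k(x)=0\}|$, and $z_r=|\{x: d_x=1,\ f_k(x)\ne0,\ f_k(x')=0 \text{ for the vertex } x'\sim x\}|$.
   Context: The induced signed graph of a real symmetric $n\times n$ matrix $M$ has vertices $x_1,\dots,x_n$, edge $\{x_i,x_j\}$ iff $i\ne j$ and $M_{ij}\ne0$, sign $\sigma_{x_ix_j}=-M_{ij}/|M_{ij}|$; $d_x$ denotes the degree of $x$. Eigenvalues $\lambda_1\le\cdots\le\lambda_n$ are listed with multiplicity; eigenfunctions are nonzero eigenvectors viewed as functions on $V$. A walk is $y_1,\dots,y_m$ ($m\ge2$) with consecutive vertices adjacent; an S-walk of $f$ is a walk with $f(y_j)\sigma_{y_jy_{j+1}}f(y_{j+1})>0$ for all $j$. $\mathfrak{S}(f)$ is the number of equivalence classes (strong nodal domains) of the relation on $\{x:f(x)\ne0\}$ ''$x=y$ or an S-walk connects $x$ and $y$''. *)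

(* Defs.v *)
From HB Require Import structures.
From mathcomp Require Import all_boot all_order all_algebra.
From mathcomp Require Import boolp reals.
Set Implicit Arguments. Unset Strict Implicit. Unset Printing Implicit Defensive.
Import Order.TTheory GRing.Theory Num.Theory.
Local Open Scope ring_scope.

Section SignedGraph.
Variables (R : realType) (n : nat) (M : 'M[R]_n).

Definition adj (x y : 'I_n) : bool := (x != y) && (M x y != 0).

Definition sgn (x y : 'I_n) : R := - M x y / `|M x y|.

Definition deg (x : 'I_n) : nat := #|[set y | adj x y]|.

Definition fv (f : 'cV[R]_n) (x : 'I_n) : R := f x 0.

Definition Sstep (f : 'cV[R]_n) (x y : 'I_n) : bool :=
  adj x y && (0 < fv f x * sgn x y * fv f y).

Definition Swalk (f : 'cV[R]_n) (p : seq 'I_n) : bool :=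
  if p is y1 :: q then (0 < size q)%N && path (Sstep f) y1 q else false.

Definition Srel (f : 'cV[R]_n) (x y : 'I_n) : Prop :=
  x = y \/ exists y1 q, [/\ Swalk f (y1 :: q), y1 = x & last y1 q = y].

Definition supp (f : 'cV[R]_n) : {set 'I_n} := [set x | fv f x != 0].

Definition Sclass (f : 'cV[R]_n) (x : 'I_n) : {set 'I_n} :=
  [set y in supp f | `[< Srel f x y >]].

Definition nSdomains (f : 'cV[R]_n) : nat :=
  #|[set Sclass f x | x in supp f]|.

Definition nleaves : nat := #|[set x | deg x == 1%N]|.

Definition zl (f : 'cV[R]_n) : nat := #|[set x | (deg x == 1%N) && (fv f x == 0)]|.

Definition zr (f : 'cV[R]_n) : nat :=
  #|[set x | [&& deg x == 1%N, fv f x != 0 &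
                 [forall y, adj x y ==> (fv f y == 0)]]]|.

End SignedGraph.

(* Main.v *)
Set Warnings "-all".
Require Import Defs.
From HB Require Import structures.
From mathcomp Require Import all_boot all_order all_algebra.
From mathcomp Require Import boolp reals.
From mathcomp Require Import ring lra zify.
Import Order.TTheory GRing.Theory Num.Theory.
Local Open Scope ring_scope.

Lemma CtC0 (R : realFieldType) m n (C : 'M[R]_(m, n)) : C^T *m C = 0 -> C = 0.
Proof.
move=> H; apply/matrixP => i j; rewrite mxE.
have := congr1 (fun X : 'M[R]_n => X j j) H; rewrite !mxE => /eqP.
rewrite psumr_eq0 => [/allP /(_ i (mem_index_enum _))|k _].
  by rewrite implyTb !mxE mulf_eq0 orbb => /eqP.
by rewrite mxE -expr2 sqr_ge0.
Qed.

Lemma sym_exp (R : realFieldType) n (B : 'M[R]_n.+1) j : B^T = B -> (B ^+ j)^T = B ^+ j.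
Proof.
move=> sB; elim: j => [|j IH]; first by rewrite expr0 trmx1.
by rewrite exprS -mulmxE trmx_mul IH sB mulmxE -exprSr exprS.
Qed.

Lemma sym_nil (R : realFieldType) n (B : 'M[R]_n.+1) m : B^T = B -> B ^+ m = 0 -> B = 0.
Proof.
move=> sB Bm.
have half j : B ^+ (j + j) = 0 -> B ^+ j = 0.
  by move=> H; apply: CtC0; rewrite sym_exp // mulmxE -exprD.
suff H: forall t, B ^+ (2 ^ t) = 0 -> B = 0.
  apply: (H m); rewrite -(subnK (ltnW (ltn_expl m (isT : (1 < 2)%N)))) exprD Bm mulr0 //.
elim=> [|t IH]; first by rewrite expr1.
by rewrite expnS mul2n -addnn => /half.
Qed.

Lemma sym_horner (R : realFieldType) n (M : 'M[R]_n.+1) (p : {poly R}) :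
  M^T = M -> (horner_mx M p)^T = horner_mx M p.
Proof.
move=> sM; elim/poly_ind: p => [|p c IH]; first by rewrite rmorph0 trmx0.
rewrite rmorphD rmorphM /= horner_mx_X horner_mx_C linearD /= tr_scalar_mx.
rewrite -mulmxE trmx_mul sM IH; congr (_ + _).
have := @comm_mx_horner _ _ M M p erefl; by rewrite /comm_mx => ->.
Qed.

Lemma dvdp_big_seq (R : idomainType) (I : Type) (r : seq I) (F G : I -> {poly R}) :
  (forall a, F a %| G a) -> \prod_(a <- r) F a %| \prod_(a <- r) G a.
Proof.
move=> FG; elim: r => [|a r IH]; first by rewrite !big_nil.
by rewrite !big_cons dvdp_mul.
Qed.

Lemma minpoly_sym (R : realFieldType) n (M : 'M[R]_n.+1) (s : seq R) :
  M^T = M -> char_poly M = \prod_(a <- s) ('X - a%:P) ->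
  mxminpoly M %| \prod_(a <- undup s) ('X - a%:P).
Proof.
move=> sM cM; apply: mxminpoly_min.
apply: (@sym_nil _ _ _ (size s)); first exact: sym_horner.
rewrite -rmorphXn /=.
have: char_poly M %| (\prod_(a <- undup s) ('X - a%:P)) ^+ size s.
  rewrite cM -prodrXl -(big_undup_iterop_count _ s xpredT).
  apply: dvdp_big_seq => a.
  have -> : forall k (x : {poly R}), iterop k *%R x 1 = x ^+ k.
    by case=> [|k] x //=; rewrite iteropS iter_mulr_1 ?exprS // -exprS.
  by apply: dvdp_exp2l; apply: count_size.
case/dvdpP => q ->; rewrite rmorphM /= Cayley_Hamilton mulr0 //.
Qed.
Lemma char_poly_conj (R : fieldType) n (P A : 'M[R]_n) : P \in unitmx ->
  char_poly (P *m A *m invmx P) = char_poly A.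
Proof.
move=> Pu; rewrite /char_poly.
set P' := map_mx polyC P; set Q' := map_mx polyC (invmx P).
have PQ : P' *m Q' = 1%:M by rewrite -map_mxM mulmxV // map_mx1.
have -> : char_poly_mx (P *m A *m invmx P) = P' *m char_poly_mx A *m Q'.
  rewrite /char_poly_mx mulmxBr mulmxBl mul_mx_scalar -scalemxAl PQ.
  by rewrite -!map_mxM scalemx1.
rewrite !det_mulmx mulrC mulrA -det_mulmx mulmxE.
have -> : Q' * P' = 1 by rewrite -mulmxE -map_mxM mulVmx // map_mx1.
by rewrite det1 mul1r.
Qed.

Lemma diag_decomp (R : realFieldType) n (M : 'M[R]_n.+1) (s : seq R) :
  M^T = M -> char_poly M = \prod_(a <- s) ('X - a%:P) ->
  exists P d, [/\ P \in unitmx, P *m M = diag_mx d *m P &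
    perm_eq s [seq d 0 i | i <- enum 'I_n.+1]].
Proof.
move=> sM cM.
have [|P Pu] := (diagonalizableP M).2.
  by exists (undup s); [exact: undup_uniq | exact: minpoly_sym].
case/(similar_diagLR Pu) => d Md; exists P, d; split => //.
  by rewrite Md conjumx ?unitmx_inv // invmxK !mulmxA mulmxV // mul1mx.
have : char_poly M = char_poly (diag_mx d).
  by rewrite Md conjumx ?unitmx_inv // char_poly_conj ?unitmx_inv.
rewrite cM char_poly_trig ?diag_mx_is_trig // => E.
apply: prod_XsubC_eq; rewrite E big_map big_enum /=.
by apply: eq_bigr => i _; rewrite mxE eqxx mulr1n.
Qed.
Lemma qformE (R : comPzRingType) n (x y : 'rV[R]_n) (A : 'M[R]_n) :
  (x *m A *m y^T) 0 0 = \sum_i \sum_j x 0 i * A i j * y 0 j.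
Proof.
rewrite mxE (exchange_big) /=; apply: eq_bigr => j _.
by rewrite !mxE mulr_suml.
Qed.

Lemma sumsq_gt0 (R : realFieldType) n (v : 'rV[R]_n) : v != 0 ->
  0 < (v *m v^T) 0 0.
Proof.
move=> vN0; have [k vk] : exists k, v 0 k != 0.
  apply/existsP; apply: contraNT vN0; rewrite negb_exists => /forallP H.
  by apply/eqP/rowP => k; rewrite mxE; move: (H k); rewrite negbK => /eqP.
rewrite mxE; under eq_bigr do rewrite mxE -expr2.
rewrite (bigD1 k) //=.
have h1 : 0 < v 0 k ^+ 2 by rewrite lt_def sqrf_eq0 vk sqr_ge0.
apply: (lt_le_trans h1); rewrite lerDl.
by apply: sumr_ge0 => i _; rewrite sqr_ge0.
Qed.

Lemma neg_form (R : rcfType) n (M P : 'M[R]_n) (d : 'rV[R]_n) (lam : R) (c : 'rV_n) :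
  M^T = M -> P \in unitmx -> P *m M = diag_mx d *m P ->
  (forall i, c 0 i != 0 -> d 0 i < lam) -> c != 0 ->
  ((c *m P) *m (M - lam%:M) *m (c *m P)^T) 0 0 < 0.
Proof.
move=> sM Pu PM cI cN0.
set G := P *m P^T.
have sG : G^T = G by rewrite /G trmx_mul trmxK.
have DG : P *m M *m P^T = diag_mx d *m G by rewrite PM /G mulmxA.
have GD : P *m M *m P^T = G *m diag_mx d.
  have T : (P *m M *m P^T)^T = P *m M *m P^T by rewrite !trmx_mul trmxK sM mulmxA.
  by rewrite -T DG trmx_mul sG tr_diag_mx.
have dG i j : d 0 i * G i j = G i j * d 0 j.
  have := congr1 (fun X : 'M[R]_n => X i j) (etrans (esym DG) GD).
  by rewrite mul_diag_mx mul_mx_diag !mxE.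
set sq := fun i => Num.sqrt (lam - d 0 i).
set w := \row_i (c 0 i * sq i).
have E : (c *m P *m (M - lam%:M) *m (c *m P)^T) = c *m (P *m M *m P^T - lam *: G) *m c^T.
  rewrite trmx_mul /G !mulmxBr !mulmxBl mul_mx_scalar -!scalemxAl -!scalemxAr.
  by rewrite !mulmxA -scalemxAl.
have F : (c *m (P *m M *m P^T - lam *: G) *m c^T) 0 0 = - (w *m G *m w^T) 0 0.
  rewrite !qformE -sumrN; apply: eq_bigr => i _; rewrite -sumrN.
  apply: eq_bigr => j _.
  have -> : (P *m M *m P^T - lam *: G) i j = d 0 i * G i j - lam * G i j.
    by rewrite DG mul_diag_mx !mxE.
  have wE k : w 0 k = c 0 k * sq k by rewrite mxE.
  rewrite !wE.
  have [ci0|ciN0] := eqVneq (c 0 i) 0; first by rewrite ci0 !(mulr0, mul0r, subrr, oppr0).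
  have [cj0|cjN0] := eqVneq (c 0 j) 0; first by rewrite cj0 !(mulr0, mul0r, subrr, oppr0).
  have [Gij0|GijN0] := eqVneq (G i j) 0; first by rewrite Gij0 !(mulr0, mul0r, subrr, oppr0).
  have dij : d 0 i = d 0 j by apply: (mulIf GijN0); rewrite dG mulrC.
  have sqij : sq i * sq j = lam - d 0 i.
    rewrite /sq dij -expr2 sqr_sqrtr // subr_ge0 ltW //; apply: cI.
    exact: cjN0.
  have -> : c 0 i * sq i * G i j * (c 0 j * sq j) = c 0 i * G i j * c 0 j * (sq i * sq j) by ring.
  rewrite sqij; ring.
rewrite E F oppr_lt0.
have -> : w *m G *m w^T = (w *m P) *m (w *m P)^T by rewrite /G trmx_mul !mulmxA.
apply: sumsq_gt0; rewrite mulmx_free_eq0 ?row_free_unit //.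
have [k ck] : exists k, c 0 k != 0.
  apply/existsP; apply: contraNT cN0; rewrite negb_exists => /forallP H.
  by apply/eqP/rowP => k; rewrite mxE; move: (H k); rewrite negbK => /eqP.
apply/eqP => /rowP /(_ k); rewrite !mxE => /eqP; rewrite mulf_eq0 (negPf ck) /=.
by rewrite /sq gt_eqF // sqrtr_gt0 subr_gt0 cI.
Qed.
Definition selmx (R : fieldType) {n : nat} (S : {set 'I_n}) : 'M[R]_(#|S|, n) :=
  \matrix_(j, i) ((i == enum_val j)%:R).

Lemma selmx_supp (R : fieldType) n (S : {set 'I_n}) (a : 'rV[R]_#|S|) i :
  (a *m selmx R S) 0 i != 0 -> i \in S.
Proof.
apply: contraR => iS; rewrite mxE big1 // => j _; rewrite mxE.
case: eqP => [Ei|]; last by rewrite mulr0.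
by move: (enum_valP j); rewrite -Ei (negPf iS).
Qed.

Lemma rank_selmx (R : fieldType) n (S : {set 'I_n}) : \rank (selmx R S) = #|S|.
Proof.
apply/eqP; rewrite eqn_leq rank_leq_row /=.
have E : \rank (selmx R S *m (selmx R S)^T) = #|S|.
  rewrite -[RHS](mxrank1 R); congr (\rank _); apply/matrixP => j k.
  rewrite !mxE (bigD1 (enum_val j)) //= big1 => [|i /negPf ij].
    rewrite !mxE eqxx mul1r addr0 (inj_eq enum_val_inj) //.
  by rewrite !mxE ij mul0r.
by rewrite -{1}E mxrankM_maxl.
Qed.

Lemma dim_arg (R : fieldType) n (S I : {set 'I_n}) (P : 'M[R]_n) : P \in unitmx ->
  (forall y c : 'rV[R]_n, y != 0 -> (forall i, y 0 i != 0 -> i \in S) ->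
     (forall i, c 0 i != 0 -> i \in I) -> y = c *m P -> False) ->
  (#|S| + #|I| <= n)%N.
Proof.
move=> Pu H; rewrite leqNgt; apply/negP => Hlt.
set A := selmx R S; set B := selmx R I *m P.
have rB : \rank B = #|I| by rewrite mxrankMfree ?row_free_unit // rank_selmx.
have := mxrank_sum_cap A B; rewrite rB rank_selmx => E.
have : (A :&: B)%MS != 0.
  rewrite -mxrank_eq0; apply/eqP => r0; move: E; rewrite r0 addn0 => E.
  by move: (rank_leq_col (A + B)%MS); rewrite E leqNgt Hlt.
move=> XN0; have [k [l kl]] : exists k l, (A :&: B)%MS k l != 0.
  apply: boolp.contrapT => H0; move/eqP: XN0; apply; apply/matrixP => k l.
  rewrite mxE; apply/eqP; apply: boolp.contrapT => kl; apply: H0; exists k, l.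
  exact/negP.
set y := row k (A :&: B)%MS.
have yN0 : y != 0 by apply/eqP => /rowP /(_ l); rewrite !mxE => /eqP; apply/negP.
have yA : (y <= A)%MS by apply: submx_trans (row_sub _ _) (capmxSl _ _).
have yB : (y <= B)%MS by apply: submx_trans (row_sub _ _) (capmxSr _ _).
case/submxP: yA => a ya; case/submxP: yB => b yb.
apply: (H y (b *m selmx R I)) => //.
- by move=> i; rewrite ya; apply: selmx_supp.
- exact: selmx_supp.
- by rewrite yb mulmxA.
Qed.
Definition goodset {R : realType} {n : nat} (M : 'M[R]_n) (f : 'cV[R]_n) : {set 'I_n} :=
  [set x | [&& deg M x == 1%N, fv f x != 0 &
     [forall z, adj M x z ==> (fv f z != 0) ==> Sstep M f x z]]].

Lemma Sstep_neg (R : realType) n (M : 'M[R]_n) (f : 'cV[R]_n) x z :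
  Sstep M f x z -> M x z * fv f x * fv f z < 0.
Proof.
case/andP => /andP [_ Mxz] H.
have aM : 0 < `|M x z| by rewrite normr_gt0.
move: H; rewrite /sgn.
have -> : fv f x * (- M x z / `|M x z|) * fv f z = - (M x z * fv f x * fv f z) / `|M x z|.
  by rewrite mulNr mulNr -mulNr; field; rewrite gt_eqF.
by rewrite pmulr_lgt0 ?invr_gt0 // oppr_gt0.
Qed.

Lemma nonneg_form (R : realType) n (M : 'M[R]_n) (f : 'cV[R]_n) (lam : R) (y : 'rV[R]_n) :
  M^T = M -> M *m f = lam *: f ->
  (forall i, y 0 i != 0 -> i \in goodset M f) ->
  0 <= (y *m (M - lam%:M) *m y^T) 0 0.
Proof.
move=> sM Mf ysupp.
set F := fun i => fv f i.
set g := fun i => y 0 i / F i.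
have yg i : y 0 i = g i * F i.
  have [y0|yN0] := eqVneq (y 0 i) 0; first by rewrite /g y0 !mul0r.
  move: (ysupp i yN0); rewrite inE => /and3P [_ fN0 _].
  by rewrite /g divfK.
have eig i : \sum_j M i j * F j = lam * F i.
  have := congr1 (fun X : 'cV[R]_n => X i 0) Mf; rewrite !mxE => <-.
  by apply: eq_bigr => j _.
have Msym i j : M j i = M i j.
  by have := congr1 (fun X : 'M[R]_n => X i j) sM; rewrite mxE.
have QE : (y *m (M - lam%:M) *m y^T) 0 0 =
    \sum_i \sum_j y 0 i * M i j * y 0 j - lam * \sum_i y 0 i ^+ 2.
  rewrite mulmxBr mulmxBl mul_mx_scalar -scalemxAl.
  have mE (A B : 'M[R]_1) a : (A - a *: B) 0 0 = A 0 0 - a * B 0 0 by rewrite !mxE.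
  rewrite mE qformE.
  congr (_ - _); congr (_ * _); rewrite mxE; apply: eq_bigr => i _.
  by rewrite !mxE expr2.
set S := \sum_i \sum_j g i * F i * M i j * (g j * F j).
set T1 := \sum_i \sum_j g i ^+ 2 * F i * M i j * F j.
set T2 := \sum_i \sum_j g j ^+ 2 * F i * M i j * F j.
have ST : \sum_i \sum_j y 0 i * M i j * y 0 j = S.
  by apply: eq_bigr => i _; apply: eq_bigr => j _; rewrite !yg.
have T1E : lam * \sum_i y 0 i ^+ 2 = T1.
  rewrite mulr_sumr; apply: eq_bigr => i _.
  have -> : \sum_j g i ^+ 2 * F i * M i j * F j = g i ^+ 2 * F i * \sum_j M i j * F j.
    by rewrite mulr_sumr; apply: eq_bigr => j _; rewrite mulrA.
  by rewrite eig yg; ring.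
have T12 : T2 = T1.
  rewrite /T2 exchange_big /=; apply: eq_bigr => i _; apply: eq_bigr => j _.
  by rewrite Msym; ring.
have key : \sum_i \sum_j (- (M i j * F i * F j) * (g i - g j) ^+ 2) = 2 * (S - T1).
  transitivity (\sum_i \sum_j (2 * (g i * F i * M i j * (g j * F j))
       - g i ^+ 2 * F i * M i j * F j - g j ^+ 2 * F i * M i j * F j)).
    by apply: eq_bigr => i _; apply: eq_bigr => j _; ring.
  under eq_bigr do rewrite !sumrB -mulr_sumr.
  rewrite !sumrB -mulr_sumr -/S -/T1 -/T2 T12; ring.
rewrite QE ST T1E.
have : 0 <= 2 * (S - T1).
  rewrite -key; apply: sumr_ge0 => i _; apply: sumr_ge0 => j _.
  have [->|ij] := eqVneq i j; first by rewrite subrr expr0n /= mulr0.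
  have sq0 : 0 <= (g i - g j) ^+ 2 by apply: sqr_ge0.
  have [M0|MN0] := eqVneq (M i j) 0; first by rewrite M0 !mul0r oppr0 mul0r.
  have [Fi0|FiN0] := eqVneq (F i) 0; first by rewrite Fi0 !(mulr0, mul0r, oppr0).
  have [Fj0|FjN0] := eqVneq (F j) 0; first by rewrite Fj0 !(mulr0, mul0r, oppr0).
  have good_neg a b : a \in goodset M f -> a != b -> M a b != 0 -> F b != 0 ->
      M a b * F a * F b < 0.
    rewrite inE => /and3P [_ _ /forallP /(_ b)] H ab Mab Fb; apply: Sstep_neg.
    by move: H; rewrite /adj ab Mab Fb.
  have gz k : k \notin goodset M f -> g k = 0.
    move=> kN; rewrite /g; have [->|yk] := eqVneq (y 0 k) 0; first by rewrite mul0r.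
    by move: (ysupp k yk); rewrite (negPf kN).
  have [iG|iN] := boolP (i \in goodset M f).
    apply: mulr_ge0 => //; rewrite oppr_ge0 ltW //; exact: good_neg.
  have [jG|jN] := boolP (j \in goodset M f).
    apply: mulr_ge0 => //; rewrite oppr_ge0 ltW //.
    have ji : j != i by rewrite eq_sym.
    have Mji : M j i != 0 by rewrite Msym.
    have := good_neg j i jG ji Mji FiN0.
    by rewrite Msym mulrAC.
  by rewrite !gz // subrr expr0n /= mulr0.
by rewrite pmulr_rge0.
Qed.
Lemma Sclass1 (R : realType) n (M : 'M[R]_n) (f : 'cV[R]_n) x :
  fv f x != 0 -> (forall z, ~~ Sstep M f x z) -> Sclass M f x = [set x].
Proof.
move=> fx noS; apply/setP => y; rewrite !inE.
apply/idP/idP => [/andP [_ /asboolP [->//|[y1 [q [W e1 _]]]]]|/eqP ->].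
  move: W; rewrite /Swalk; case: q => [|z q] //= /andP [st _].
  by move: (noS z); rewrite -e1 st.
by rewrite fx; apply/asboolP; left.
Qed.

Lemma count_part (R : realType) n (M : 'M[R]_n) (f : 'cV[R]_n) :
  let Lnz := [set x | (deg M x == 1%N) && (fv f x != 0)] in
  (nleaves M = #|Lnz| + zl M f)%N /\
  (#|Lnz| = #|goodset M f| + #|Lnz :\: goodset M f|)%N /\
  (#|Lnz :\: goodset M f| + zr M f <= nSdomains M f)%N.
Proof.
move=> Lnz; split; last split.
- rewrite /nleaves /zl -(cardsID [set x | fv f x != 0]).
  have -> : [set x | deg M x == 1%N] :&: [set x | fv f x != 0] = Lnz.
    by apply/setP => x; rewrite !inE.
  have -> : [set x | deg M x == 1%N] :\: [set x | fv f x != 0] =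
     [set x | (deg M x == 1%N) && (fv f x == 0)].
    by apply/setP => x; rewrite !inE negbK andbC.
  by [].
- rewrite -(cardsID (goodset M f) Lnz).
  have -> : Lnz :&: goodset M f = goodset M f.
    apply/setP => x; rewrite !inE; apply/andP/idP => [[] //|].
    by move=> H; split => //; move: H; case/and3P => -> ->.
  by [].
set Ns := Lnz :\: goodset M f.
set Zr := [set x | [&& deg M x == 1%N, fv f x != 0 & [forall y, adj M x y ==> (fv f y == 0)]]].
have noS x : x \in Ns :|: Zr -> fv f x != 0 /\ forall z, ~~ Sstep M f x z.
  rewrite inE => /orP [/setDP [xL xG]|].
    move: xL; rewrite inE => /andP [dx fx]; split=> // z; apply/negP => st.
    suff : x \in goodset M f by rewrite (negPf xG).
    rewrite inE dx fx /=; apply/forallP => z'; apply/implyP => axz'; apply/implyP => _.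
    move: dx; rewrite /deg => /cards1P [a Ha].
    have : z \in [set y | adj M x y] by rewrite inE; case/andP: st.
    have : z' \in [set y | adj M x y] by rewrite inE.
    by rewrite Ha !inE => /eqP -> /eqP <-.
  rewrite inE => /and3P [dx fx /forallP H].
  split => // z; apply/negP => /andP [axz].
  by move: (H z); rewrite axz /= => /eqP ->; rewrite mulr0 ltxx.
have disj : Ns :&: Zr = set0.
  apply/setP => x; rewrite inE in_set0; apply/negP => /andP [/setDP [_ xG]].
  rewrite inE => /and3P [dx fx /forallP H].
  move: xG; rewrite inE dx fx /=; apply/negP; rewrite negbK.
  apply/forallP => z; apply/implyP => axz; move: (H z); rewrite axz /= => ->.
  by [].
have := cardsUI Ns Zr; rewrite disj cards0 addn0 => <-.
rewrite /nSdomains.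
have <- : #|[set Sclass M f x | x in Ns :|: Zr]| = #|Ns :|: Zr|.
  apply: card_in_imset => x1 x2 /noS [f1 n1] /noS [f2 n2].
  by rewrite !Sclass1 // => /set1_inj.
apply: subset_leq_card; apply: imsetS; apply/subsetP => x /noS [fx _].
by rewrite inE.
Qed.

Theorem theorem6p10 (R : realType) (n : nat) (M : 'M[R]_n) (s : seq R)
    (k : nat) (f : 'cV[R]_n) :
  M^T = M ->
  (* s = [:: lambda_1; ...; lambda_n], the eigenvalues of M with multiplicity, sorted *)
  sorted <=%R s ->
  char_poly M = \prod_(a <- s) ('X - a%:P) ->
  (0 < k <= n)%N ->
  ((1 < k)%N -> s`_(k.-2) < s`_(k.-1)) ->
  f != 0 ->
  M *m f = s`_(k.-1) *: f ->
  ((k : int) + (nleaves M : int) - 1 - (n : int) - (zl M f : int) + (zr M f : int)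
     <= (nSdomains M f : int))%R.
Proof.
case: n M f => [|n'] M f sM ss cM /andP [k0 kn]; first by move: (leq_trans k0 kn).
move=> gap fN0 Mf.
set lam := s`_(k.-1).
have [P [d [Pu PM pe]]] := @diag_decomp _ _ M s sM cM.
set I := [set i | d 0 i < lam].
have sz : size s = n'.+1.
  by have := congr1 (fun p : {poly R} => size p) cM; rewrite /= size_char_poly size_prod_XsubC => -[].
have hI : #|I| = k.-1.
  have -> : #|I| = count (fun x => x < lam) s.
    rewrite (permP pe) count_map cardE /enum_mem size_filter.
    rewrite (@eq_filter _ _ predT) // filter_predT; apply: eq_count => i.
    by rewrite /= inE.
  apply/eqP; rewrite eqn_leq; apply/andP; split.
    rewrite leqNgt; apply/negP => H.
    have := nth_count_lt 0 ss H.
    by rewrite ltxx.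
  move: k0 kn gap Mf; rewrite /lam; clear I lam.
  case: k => [//|[//|k]] _ kn gap Mf /=.
  rewrite leqNgt; apply/negP => H.
  have H2 : (count (fun x => (x < s`_k.+1)%R) s <= k < size s)%N.
    by rewrite -ltnS H sz (leq_trans _ kn).
  have := nth_count_ge 0 ss H2.
  by rewrite leNgt (gap isT).
have dim : (#|goodset M f| + #|I| <= n'.+1)%N.
  apply: (@dim_arg _ _ (goodset M f) I P Pu) => y c yN0 ysupp csupp yc.
  have cN0 : c != 0 by apply: contraNneq yN0 => c0; rewrite yc c0 mul0mx.
  have cI i : c 0 i != 0 -> d 0 i < lam by move/csupp; rewrite inE.
  have := @neg_form _ _ M P d lam c sM Pu PM cI cN0.
  have := @nonneg_form _ _ M f lam y sM Mf ysupp.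
  by rewrite yc => /le_lt_trans H /H; rewrite ltxx.
have [h2 [h3 h4]] := @count_part _ _ M f.
rewrite hI in dim.
move: h2 h3 h4 dim k0; set a := nleaves M; set b := zl M f; set c := zr M f.
set e := nSdomains M f; set g := #|goodset M f|.
move=> h2 h3 h4 dim k0.
lia.
Qed.
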